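(* If $G$ is a connected locally Dirac graph of order $n \ge 8$, then the minimum degree satisfies $\delta(G) \ge 5$.
   Context: A graph $G$ is locally Dirac if for every vertex $v \in V(G)$ and every $u \in N(v)$, $\deg_{\langle N(v)\rangle}(u) \ge \deg_G(v)/2$, where $N(v)$ is the open neighbourhood of $v$ and $\langle N(v)\rangle$ the subgraph induced by it. *)

(* Defs.v *)
From mathcomp Require Import all_boot.
Set Implicit Arguments. Unset Strict Implicit. Unset Printing Implicit Defensive.

Definition simple_graph (T : finType) (e : rel T) : Prop :=
  symmetric e /\ irreflexive e.

Definition nbhd (T : finType) (e : rel T) (v : T) : {set T} := [set u | e v u].

Definition deg (T : finType) (e : rel T) (v : T) : nat := #|nbhd e v|.

Definition deg_in_nbhd (T : finType) (e : rel T) (v u : T) : nat :=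
  #|nbhd e u :&: nbhd e v|.

(* Locally Dirac: for all v and u in N(v), deg_<N(v)>(u) >= deg_G(v)/2
   (stated without division: 2 * deg_<N(v)>(u) >= deg_G(v)). *)
Definition locally_dirac (T : finType) (e : rel T) : Prop :=
  forall v u, u \in nbhd e v -> deg e v <= 2 * deg_in_nbhd e v u.

Definition connected_graph (T : finType) (e : rel T) : Prop :=
  forall x y : T, connect e x y.

(* Main.v *)
Require Import Defs.
From mathcomp Require Import all_boot.
From mathcomp Require Import zify.

Set Implicit Arguments. Unset Strict Implicit. Unset Printing Implicit Defensive.

Lemma card_disjU (T : finType) (B C : {set T}) :
  (forall x, x \in B -> x \notin C) -> #|B :|: C| = #|B| + #|C|.
Proof.
move=> H; rewrite cardsU.
have -> : B :&: C = set0.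
  apply/setP => x; rewrite !inE; case: (boolP (x \in B)) => // /H.
  by move/negbTE => ->.
by rewrite cards0 subn0.
Qed.

Lemma card_sub_leq (T : finType) (B C : {set T}) : B \subset C -> #|B| <= #|C|.
Proof. exact: subset_leq_card. Qed.

Lemma cardU_leq (T : finType) (B C : {set T}) : #|B :|: C| <= #|B| + #|C|.
Proof. have := cardsUI B C; lia. Qed.

Lemma card_nb_sum (T : finType) (e : rel T) x (B : {set T}) :
  #|nbhd e x :&: B| = \sum_(y in B) e x y.
Proof.
rewrite -sum1_card big_mkcond /= [RHS]big_mkcond /=.
apply: eq_bigr => y _; rewrite !inE.
by case: (e x y); case: (y \in B).
Qed.

Lemma path_closed (T : finType) (e : rel T) (S : {set T}) :
  (forall x y, e x y -> x \in S -> y \in S) ->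
  forall x y, connect e x y -> x \in S -> y \in S.
Proof.
move=> cl x _ /connectP[p e_p ->].
elim: p x e_p => //= y p IHp x /andP[exy ep] xS.
by apply: IHp ep (cl _ _ exy xS).
Qed.

Theorem mainTheorem6 (T : finType) (e : rel T) :
  simple_graph e -> connected_graph e -> locally_dirac e -> 8 <= #|T| ->
  forall v : T, 5 <= deg e v.
Proof.
move=> [esym eirr] conn ld cardT v.
rewrite ltnNge; apply/negP; rewrite /deg => degv.
have inN : forall x y, (y \in nbhd e x) = e x y by move=> x y; rewrite inE.
have ldN : forall x y, e x y ->
    #|nbhd e x| <= 2 * #|nbhd e y :&: nbhd e x|.
  by move=> x y exy; have := ld x y; rewrite inN => /(_ exy).
have irr : forall x, e x x = false by move=> x; apply: eirr.
set A := nbhd e v.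
set X := [set w | [&& w != v, w \notin A & [exists a in A, e a w]]].
have Adef : nbhd e v = A by [].
have inA : forall y, (y \in A) = e v y by move=> y; rewrite /A inE.
have inX : forall w, (w \in X) = [&& w != v, w \notin A & [exists a in A, e a w]].
  by move=> w; rewrite /X inE.
clearbody X A. rewrite Adef in degv.
have vA : v \notin A by rewrite inA irr.
have hA : forall u, u \in A -> #|nbhd e u :&: A| + 1 <= #|A|.
  move=> u uA; rewrite (cardsD1 u A) uA.
  have : nbhd e u :&: A \subset A :\ u.
    apply/subsetP => y; rewrite !inE => /andP[euy ->]; rewrite andbT.
    by apply/negP => /eqP eq; rewrite eq irr in euy.
  move/card_sub_leq; lia.
have step1 : forall u, u \in A ->
    #|nbhd e u :&: X| + 1 <= #|nbhd e u :&: A| /\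
    1 + #|nbhd e u :&: A| + #|nbhd e u :&: X| <= #|nbhd e u|.
  move=> u uA.
  have evu : e v u by rewrite -inA.
  have h1 := ldN u v (ltac:(by rewrite esym)).
  rewrite setIC in h1.
  have h2 := cardsID A (nbhd e u).
  have h3 : #|v |: (nbhd e u :&: X)| <= #|nbhd e u :\: A|.
    apply: card_sub_leq; apply/subsetP => y; rewrite !inE.
    case/orP => [/eqP -> | /andP[euy]].
      by rewrite vA /= esym.
    by rewrite inX => /and3P[_ -> _]; rewrite euy.
  rewrite cardsU1 in h3.
  have nv : (v \in nbhd e u :&: X) = false by rewrite !inE inX eqxx /= andbF.
  rewrite nv /= in h3.
  rewrite Adef in h1; split; lia.
have step2 : forall w, w \in X -> 3 <= #|nbhd e w :&: A|.
  move=> w; rewrite inX => /and3P[wv wA /exists_inP[u uA euw]].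
  have ewu : e w u by rewrite esym.
  have h1 := ldN u w euw.
  have [s1a s1b] := step1 u uA.
  have uin : u \in nbhd e w :&: A by rewrite !inE ewu uA.
  have win : w \in nbhd e u :&: X.
    by rewrite !inE inX euw wv wA /=; apply/exists_inP; exists u.
  have c1 := cardsD1 u (nbhd e w :&: A); rewrite uin /= in c1.
  have c2 := cardsD1 w (nbhd e u :&: X); rewrite win /= in c2.
  have sub : nbhd e w :&: nbhd e u \subset
      ((nbhd e w :&: A) :\ u) :|: ((nbhd e u :&: X) :\ w).
    apply/subsetP => y; rewrite !inE => /andP[ewy euy].
    have yu : y != u by apply/negP => /eqP eq; rewrite eq irr in euy.
    have yw : y != w by apply/negP => /eqP eq; rewrite eq irr in ewy.
    rewrite ewy euy yu yw /=.
    case: (boolP (y \in A)) => yA; first by [].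
    rewrite /= inX; apply/and3P; split => //.
      apply/negP => /eqP eq; rewrite eq in ewy.
      by move: wA; rewrite inA esym ewy.
    by apply/exists_inP; exists u.
  have := card_sub_leq sub.
  have := cardU_leq ((nbhd e w :&: A) :\ u) ((nbhd e u :&: X) :\ w).
  lia.
have oA : forall u, u \in A -> #|nbhd e u :&: X| <= 2.
  move=> u uA; have [s1a _] := step1 u uA; have := hA u uA; lia.
have dc : \sum_(w in X) #|nbhd e w :&: A| = \sum_(u in A) #|nbhd e u :&: X|.
  rewrite (eq_bigr (fun w => \sum_(u in A) e w u)); last by move=> w _; apply: card_nb_sum.
  rewrite exchange_big /=; apply: eq_bigr => u _; rewrite card_nb_sum.
  by apply: eq_bigr => w _; rewrite esym.
have Xle : #|X| <= 2.
  have l1 : \sum_(w in X) 3 <= \sum_(w in X) #|nbhd e w :&: A|.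
    by apply: leq_sum => w; apply: step2.
  have l2 : \sum_(u in A) #|nbhd e u :&: X| <= \sum_(u in A) 2.
    by apply: leq_sum => u; apply: oA.
  rewrite !sum_nat_const in l1 l2; lia.
set S := v |: (A :|: X).
have clS : forall x y, e x y -> x \in S -> y \in S.
  move=> x z exz; rewrite !inE.
  case/or3P => [/eqP xv | xA | xX].
  - by rewrite xv in exz; rewrite inA exz /= orbT.
  - case: (boolP (z == v)) => //= zv; case: (boolP (z \in A)) => //= zA.
    by rewrite inX zv zA /=; apply/exists_inP; exists x.
  - apply/negPn/negP; rewrite !negb_or => /and3P[zv zA zX].
    have xXm : x \in X by [].
    move: (xXm); rewrite inX => /and3P[xv xA' /exists_inP[u uA eux]].
    have exu : e x u by rewrite esym.
    have noA : forall y, y \in A -> e z y = false.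
      move=> y yA; apply/negP => ezy; move: zX; rewrite inX zv zA /=.
      by move/negP; apply; apply/exists_inP; exists y => //; rewrite esym.
    have h1 := ldN x u exu.
    have h2 := ldN x z exz.
    have c0 := cardsID A (nbhd e x).
    have uin : u \in nbhd e x :&: A by rewrite !inE exu uA.
    have c1 := cardsD1 u (nbhd e x :&: A); rewrite uin /= in c1.
    have zin : z \in nbhd e x :\: A by rewrite !inE exz zA.
    have c2 := cardsD1 z (nbhd e x :\: A); rewrite zin /= in c2.
    have xx : #|nbhd e x :&: X| <= 1.
      have : nbhd e x :&: X \subset X :\ x.
        apply/subsetP => y; rewrite !inE => /andP[exy ->]; rewrite andbT.
        by apply/negP => /eqP eq; rewrite eq irr in exy.
      move/card_sub_leq => H; have H2 := cardsD1 x X; rewrite xXm /= in H2.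
      clear -H H2 Xle; lia.
    have sub1 : nbhd e u :&: nbhd e x \subset
        ((nbhd e x :&: A) :\ u) :|: (nbhd e x :&: X).
      apply/subsetP => y; rewrite !inE => /andP[euy exy].
      have yu : y != u by apply/negP => /eqP eq; rewrite eq irr in euy.
      rewrite exy yu /=.
      case: (boolP (y \in A)) => yA; first by [].
      rewrite /= inX; apply/and3P; split => //.
        apply/negP => /eqP eq; rewrite eq in exy.
        by move: xA'; rewrite inA esym exy.
      by apply/exists_inP; exists u.
    have sub2 : nbhd e z :&: nbhd e x \subset (nbhd e x :\: A) :\ z.
      apply/subsetP => y; rewrite !inE => /andP[ezy exy].
      have yz : y != z by apply/negP => /eqP eq; rewrite eq irr in ezy.
      rewrite yz exy andbT /=; apply/negP => yA.
      by rewrite noA in ezy.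
    have := card_sub_leq sub1; have := card_sub_leq sub2.
    have := cardU_leq ((nbhd e x :&: A) :\ u) (nbhd e x :&: X).
    move=> Ha Hb Hc; clear -h1 h2 c0 c1 c2 xx Ha Hb Hc; lia.
have allS : forall t, t \in S.
  move=> t; apply: (path_closed clS (conn v t)); by rewrite !inE eqxx.
have : #|T| <= #|S|.
  rewrite -cardsT; apply: card_sub_leq; apply/subsetP => t _; exact: allS.
have : #|S| <= 1 + #|A :|: X|.
  by rewrite /S cardsU1; case: (v \notin A :|: X).
have := cardU_leq A X.
move=> Ha Hb Hc; clear -Ha Hb Hc Xle degv cardT; lia.
Qed.
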